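(* Let $p>q\geq 1$ be coprime integers, $X$ a smooth closed oriented $4$-manifold homotopy equivalent to $\mathbb{CP}^2$ containing a smoothly embedded copy of $B_{p,q}$, $V$ the closure of $X\setminus B_{p,q}$, and $\widehat X=R_{p,q}\cup V$, $n$, $a_1,\dots,a_n$, $v_1,\dots,v_n$ as in the context. Suppose $n\geq2$. Let $v_{n+1}\in H_2(\widehat X;\mathbb{Z})$ and $c,a_{n+1}\in\mathbb{Z}$ be such that $\{v_1,\dots,v_{n+1}\}$ is a basis of $H_2(\widehat X;\mathbb{Z})$ with Gram matrix having entries $v_i\cdot v_i=-a_i$ ($1\le i\le n+1$), $v_i\cdot v_{i+1}=1$ ($1\le i\le n-1$), $v_n\cdot v_{n+1}=c$, all other off-diagonal entries $0$, with $c^2\equiv pq-1\pmod{p^2}$ and $v_{n+1}\cdot g=1$, where $g$ is the image in $H_2(\widehat X;\mathbb{Z})$ of a generator of $H_2(V;\mathbb{Z})$. Write $g=\sum_{i=1}^{n+1}b_iv_i$. Define integers $d_1,\dots,d_n$ by $d_1=1$, $d_2=a_1d_1$, $d_s=a_{s-1}d_{s-1}-d_{s-2}$ for $s=3,\dots,n$. Then $b_i=c\,d_i$ for $i=1,\dots,n$, $\pm b_{n+1}=a_nd_n-d_{n-1}=p^2$, and $d_n=p^2-pq-1$.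
   Context: For coprime integers $p>q\geq1$, $B_{p,q}$ denotes the Stein rational homology $4$-ball arising as the rational homology ball smoothing of the cyclic quotient singularity of type $\frac{1}{p^2}(pq-1,1)$, and $R_{p,q}$ its minimal resolution, with $\partial R_{p,q}=\partial B_{p,q}$. As a smooth manifold $R_{p,q}$ is the linear plumbing of disk bundles over $2$-spheres with Euler numbers $-a_1,\dots,-a_n$, where $a_i\geq2$ and $\frac{p^2}{pq-1}=a_1-\cfrac{1}{a_2-\cfrac{1}{\cdots-\cfrac{1}{a_n}}}$, $n=b_2(R_{p,q})$; $v_i=[S_i]$ are the classes of the complex-oriented core spheres (vertex basis). $\widehat X:=R_{p,q}\cup V$ is obtained by gluing $\partial R_{p,q}$ to $\partial V$ by an orientation-reversing diffeomorphism; $H_2(\widehat X;\mathbb{Z})$ is free of rank $n+1$, and classes of $R_{p,q}$ and $V$ are viewed in it via inclusion. *)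

(* Defs.v *)
From mathcomp Require Import all_boot all_order all_algebra.
Set Implicit Arguments. Unset Strict Implicit. Unset Printing Implicit Defensive.
Import Order.TTheory GRing.Theory Num.Theory.
Local Open Scope ring_scope.

Fixpoint hjcf (l : seq int) : rat :=
  match l with
  | [::] => 0
  | [:: x] => x%:~R
  | x :: s => x%:~R - (hjcf s)^-1
  end.

(* The integers d_s (1-based): d_0 = 0, d_1 = 1, d_{s+2} = a_{s+1} d_{s+1} - d_s.
   dpair a s = (d_s, d_{s+1}). *)
Fixpoint dpair (a : nat -> int) (s : nat) : int * int :=
  match s with
  | 0 => (0, 1)
  | s'.+1 => let: (x, y) := dpair a s' in (y, a s * y - x)
  end.
Definition dseq (a : nat -> int) (s : nat) : int := (dpair a s).1.

(* Gram matrix of the basis v_1, ..., v_{n+1} (matrix index i : 'I_(n+1)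
   corresponds to v_{i+1}):  v_i.v_i = -a_i (1 <= i <= n+1),
   v_i.v_{i+1} = 1 (1 <= i <= n-1), v_n.v_{n+1} = c, all others 0. *)
Definition gram (n : nat) (a : nat -> int) (c : int) : 'M[int]_(n.+1) :=
  \matrix_(i, j)
    let i' := (i : nat).+1 in let j' := (j : nat).+1 in
    if i' == j' then - a i'
    else if ((i'.+1 == j') || (j'.+1 == i')) && (i' <= n)%N && (j' <= n)%N then 1
    else if ((i' == n) && (j' == n.+1)) || ((i' == n.+1) && (j' == n)) then c
    else 0.

(* Main.v *)
Require Import Defs.
From mathcomp Require Import all_boot all_order all_algebra.
From mathcomp Require Import zify ring lra.
Import Order.TTheory GRing.Theory Num.Theory.
Local Open Scope ring_scope.

Lemma dpairE a s : dpair a s = (dseq a s, dseq a s.+1).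
Proof.
elim: s => [//|s IH]; rewrite /dseq /= IH /=.
by case: (dpair a s.+1) => x y.
Qed.

Lemma dstep a s : dseq a s.+2 = a s.+1 * dseq a s.+1 - dseq a s.
Proof. by rewrite {1}/dseq /= dpairE. Qed.

Fixpoint epair (a : nat -> int) (s : nat) : int * int :=
  match s with
  | 0 => (-1, 0)
  | s'.+1 => let: (x, y) := epair a s' in (y, a s * y - x)
  end.
Definition eseq a s := (epair a s).1.

Lemma epairE a s : epair a s = (eseq a s, eseq a s.+1).
Proof.
elim: s => [//|s IH]; rewrite /eseq /= IH /=.
by case: (epair a s.+1) => x y.
Qed.

Lemma estep a s : eseq a s.+2 = a s.+1 * eseq a s.+1 - eseq a s.
Proof. by rewrite {1}/eseq /= epairE. Qed.

Lemma detde a k : dseq a k * eseq a k.+1 - dseq a k.+1 * eseq a k = 1.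
Proof.
elim: k => [|k IH]; first by rewrite /dseq /eseq /=; ring.
rewrite dstep estep -IH; ring.
Qed.

Definition M2 := ((int * int) * (int * int))%type.
Definition lm (x : int) (P : M2) : M2 :=
  let: ((p11, p12), (p21, p22)) := P in ((x * p11 - p21, x * p12 - p22), (p11, p12)).
Definition rm (P : M2) (y : int) : M2 :=
  let: ((p11, p12), (p21, p22)) := P in ((p11 * y + p12, - p11), (p21 * y + p22, - p21)).
Definition Lf (l : seq int) : M2 := foldr lm ((1, 0), (0, 1)) l.

Lemma Lrcons s y : Lf (rcons s y) = rm (Lf s) y.
Proof.
elim: s => [|x s IH] /=.
  by rewrite /lm /rm /=; congr ((_,_),(_,_)); ring.
rewrite IH; case: (Lf s) => [[p11 p12] [p21 p22]] /=.
congr ((_,_),(_,_)); ring.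
Qed.

Lemma Ld a k : Lf (map a (iota 1 k)) =
  ((dseq a k.+1, - dseq a k), (eseq a k.+1, - eseq a k)).
Proof.
elim: k => [|k IH].
  by rewrite /dseq /eseq /=; congr ((_,_),(_,_)); ring.
rewrite (_ : iota 1 k.+1 = rcons (iota 1 k) k.+1); last by rewrite -cats1 (_ : [:: k.+1] = iota (1 + k) 1) // -iotaD addn1.
rewrite map_rcons Lrcons IH /= dstep estep.
congr ((_,_),(_,_)); ring.
Qed.

Lemma hjcfL (s : seq int) : s != [::] -> all (fun x => 2 <= x) s ->
  hjcf s = (Lf s).1.1%:~R / (Lf s).2.1%:~R /\ 0 < (Lf s).2.1 < (Lf s).1.1.
Proof.
elim: s => [//|x s IH] _ /= /andP [hx hs].
case: s IH hs => [|y s] IH hs.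
  rewrite /= mulr1 subr0 divr1; split => //; lia.
have [IH1 /andP[IH2 IH3]] := IH isT hs.
move: IH1 IH2 IH3.
idtac.
idtac.
case: (Lf (y :: s)) => [[p11 p12] [p21 p22]] /= -> h2 h3.
split; last by apply/andP; split; nia.
have h11 : (p11%:~R : rat) != 0 by rewrite intr_eq0; lia.
have h21 : (p21%:~R : rat) != 0 by rewrite intr_eq0; lia.
rewrite intrB intrM; field; exact/andP.
Qed.
Lemma m_eq1 (m t : int) : 0 < m -> m * t = 1 -> m = 1.
Proof. move=> h1 h2. have : 0 < t by nia. move=> h3. nia. Qed.

Lemma t0 (P t : int) : 0 < P -> - P < P * t -> P * t < P -> t = 0.
Proof. move=> *; nia. Qed.

Lemma eqDP (D P k1 k2 : int) : 0 < P -> 0 < D -> P = D * k1 -> D = P * k2 -> D = P.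
Proof. move=> h1 h2 h3 h4. have: 0 < k1 by nia. have: 0 < k2 by nia. nia. Qed.


Lemma dmono n a : (forall i, (1 <= i <= n)%N -> 2 <= a i) ->
  forall k, (k <= n)%N -> 0 <= dseq a k < dseq a k.+1.
Proof.
move=> ha; elim=> [|k IH] hk; first by rewrite /dseq /=.
have /andP[h1 h2] := IH (ltnW hk).
have h3 := ha k.+1 hk.
rewrite dstep; apply/andP; split; nia.
Qed.

Lemma posA (p q : nat) : (1 <= q)%N -> (q < p)%N -> 0 < (p:int) * (p:int) - (p:int) * (q:int) - 1.
Proof. move=> h1 h2. have h3 : (p * q + p <= p * p)%N by nia. lia. Qed.

Lemma cf_part (p q n : nat) (a : nat -> int) :
  (1 <= q)%N -> (q < p)%N ->
  (forall i, (1 <= i <= n)%N -> 2 <= a i) ->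
  hjcf [seq a i | i <- iota 1 n] = ((p ^ 2)%N%:R / ((p * q)%N%:R - 1)) ->
  (2 <= n)%N ->
  dseq a n.+1 = (p ^ 2)%N%:Z /\ dseq a n = (p ^ 2)%N%:Z - (p * q)%N%:Z - 1.
Proof.
move=> hq hpq ha hh hn.
have hall : all (fun x => 2 <= x) [seq a i | i <- iota 1 n].
  apply/allP => x /mapP [i]; rewrite mem_iota => hi ->; apply: ha; lia.
have hne : [seq a i | i <- iota 1 n] != [::] by case: n hn {ha hh hall}.
have hm1 : 0 <= dseq a n.-1 < dseq a n.
  by have := dmono _ _ ha n.-1 (leq_pred n); rewrite prednK //; lia.
have hm2 := dmono _ _ ha n (leqnn n).
have [h1 /andP[h2 h3]] := hjcfL _ hne hall.
move: h1 h2 h3; rewrite Ld /= => h1 h2 h3.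
set D := dseq a n.+1 in h1 h2 h3 *.
set E := eseq a n.+1 in h1 h2 h3 *.
have hdet := detde a n. rewrite -/D -/E in hdet.
set P := (p ^ 2)%N%:Z. set Q := (p * q)%N%:Z.
have hP : P = p%:Z * p%:Z by rewrite /P expnS expn1 PoszM.
have hQ : Q = p%:Z * q%:Z by rewrite /Q PoszM.
have hcross : D * (Q - 1) = P * E.
  apply: (@intr_inj rat). rewrite !intrM intrB.
  have hE : (E%:~R : rat) != 0 by rewrite intr_eq0; lia.
  have hQ1 : ((p * q)%N%:R - 1 : rat) != 0.
    rewrite (_ : (p * q)%N%:R - 1 = (Q - 1)%:~R :> rat); last by rewrite intrB.
    rewrite intr_eq0 hQ; nia.
  move: hh; rewrite h1 => /eqP; rewrite eqr_div // => /eqP.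
  by rewrite (_ : (p * q)%N%:R - 1 = (Q - 1)%:~R :> rat) ?intrB //= => ->.
set dn := dseq a n in hdet hm1 hm2 *. set en := eseq a n in hdet.
set A := P - Q - 1. set B := Q - q%:Z * q%:Z - 1.
have hAB : (Q - 1) * A - P * B = 1 by rewrite /A /B hP hQ; ring.
have k1 : P = D * (dn * (Q - 1) - en * P).
  transitivity (P * (dn * E - D * en)); first by rewrite hdet mulr1.
  transitivity (dn * (P * E) - D * en * P); first ring.
  rewrite -hcross; ring.
have k2 : D = P * (E * A - B * D).
  transitivity (D * ((Q - 1) * A - P * B)); first by rewrite hAB mulr1.
  transitivity (A * (D * (Q - 1)) - P * B * D); first ring.
  rewrite hcross; ring.
have hP0 : 0 < P by rewrite hP; nia.
have hDP : D = P by apply: (eqDP _ _ _ _ hP0 _ k1 k2); lia.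
split => //.
have hEQ : E = Q - 1.
  apply: (@mulfI _ P); first by rewrite gt_eqF.
  by rewrite -hcross hDP.
have k3 : dn - A = P * (A * en - B * dn).
  have : dn * (Q - 1) - P * en = 1.
    by transitivity (dn * E - D * en); [rewrite hEQ hDP; ring | exact hdet].
  move=> h. transitivity (dn * ((Q - 1) * A - P * B) - A * (dn * (Q - 1) - P * en)).
    by rewrite hAB h !mulr1.
  ring.
have hA1 : 0 < A by rewrite /A hP hQ; apply: posA.
have hA2 : A < P by rewrite /A hQ; lia.
have ht : A * en - B * dn = 0.
  by apply: (t0 _ _ hP0); rewrite -k3; lia.
by move: k3; rewrite ht mulr0 => /eqP; rewrite subr_eq0 => /eqP.
Qed.


Definition gg (n : nat) (a : nat -> int) (c : int) (i j : nat) : int :=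
    let i' := i.+1 in let j' := j.+1 in
    if i' == j' then - a i'
    else if ((i'.+1 == j') || (j'.+1 == i')) && (i' <= n)%N && (j' <= n)%N then 1
    else if ((i' == n) && (j' == n.+1)) || ((i' == n.+1) && (j' == n)) then c
    else 0.

Definition off n (c : int) k : int :=
  if (k.+2 <= n)%N then 1 else if k.+1 == n then c else 0.

Lemma gg_diag n a c k : gg n a c k k = - a k.+1.
Proof. by rewrite /gg eqxx. Qed.

Ltac crush := rewrite /=; repeat (first [case: eqP => ? /= | case: leqP => ? /=]); try lia; try done.

Lemma gg_up n a c k : gg n a c k k.+1 = off n c k.
Proof. rewrite /gg /off; crush. Qed.

Lemma gg_dn n a c k : gg n a c k.+1 k = off n c k.
Proof. rewrite /gg /off; crush. Qed.

Lemma gg_far n a c i j : (i.+1 < j)%N || (j.+1 < i)%N -> gg n a c i j = 0.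
Proof. move=> h; rewrite /gg; crush. Qed.

Lemma sum_delta N (f : nat -> int) k :
  \sum_(i < N) (if (i : nat) == k then f i else 0) = if (k < N)%N then f k else 0.
Proof.
rewrite -(big_mkord xpredT (fun i => if i == k then f i else 0)).
elim: N => [|N IH]; first by rewrite big_nil.
rewrite big_nat_recr //= IH.
have [h|h|->] := ltngtP k N.
- by rewrite ltnS (ltnW h) addr0.
- by rewrite (_ : (k < N.+1)%N = false) ?addr0 //; lia.
- by rewrite ltnSn add0r.
Qed.

Lemma sum_deltaC N (x : int) k :
  \sum_(i < N) (if (i : nat) == k then x else 0) = if (k < N)%N then x else 0.
Proof. exact: (sum_delta N (fun _ => x) k). Qed.



Lemma pointwise n a c (bb : nat -> int) (i j : nat) : (j <= n)%N ->
  bb i * gg n a c i j =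
  (if i == j.-1 then (if (0 < j)%N then bb j.-1 * off n c j.-1 else 0) else 0)
  + (if i == j then bb j * (- a j.+1) else 0)
  + (if i == j.+1 then bb j.+1 * off n c j else 0).
Proof.
move=> hj.
have [h|h|->] := ltngtP i j.
- case: (ltnP i.+1 j) => h2.
    rewrite gg_far ?h2 // mulr0.
    have -> : (i == j.-1) = false by apply/eqP; lia.
    have -> : (i == j.+1) = false by apply/eqP; lia.
    by rewrite !addr0.
  have -> : j = i.+1 by lia.
  have -> : (i == i.+2) = false by apply/eqP; lia.
  by rewrite gg_up /= eqxx !addr0.
- case: (ltnP j.+1 i) => h2.
    rewrite gg_far ?h2 ?orbT // mulr0.
    have -> : (i == j.-1) = false by apply/eqP; lia.
    have -> : (i == j.+1) = false by apply/eqP; lia.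
    by rewrite !addr0.
  have -> : i = j.+1 by lia.
  have -> : (j.+1 == j.-1) = false by apply/eqP; lia.
  by rewrite gg_dn eqxx !add0r.
- have -> : (j == j.+1) = false by apply/eqP; lia.
  rewrite gg_diag.
  case: j hj => [|j] hj /=; first by rewrite !add0r addr0.
  have -> : (j.+1 == j) = false by apply/eqP; lia.
  by rewrite add0r addr0.
Qed.


Lemma colsum n a c (b : 'rV[int]_(n.+1)) (j : nat) : (j <= n)%N ->
  (b *m gram n a c) 0 (inord j) =
  (if (0 < j)%N then b 0 (inord j.-1) * off n c j.-1 else 0)
  + b 0 (inord j) * (- a j.+1)
  + (if (j < n)%N then b 0 (inord j.+1) * off n c j else 0).
Proof.
move=> hj; rewrite mxE.
set bb := fun k => b 0 (inord k).
transitivity (\sum_(i < n.+1)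
   ((if (i : nat) == j.-1 then (if (0 < j)%N then bb j.-1 * off n c j.-1 else 0) else 0)
  + (if (i : nat) == j then bb j * (- a j.+1) else 0)
  + (if (i : nat) == j.+1 then bb j.+1 * off n c j else 0))).
  apply: eq_bigr => i _.
  have -> : b 0 i = bb i by rewrite /bb inord_val.
  rewrite mxE inordK; last by lia.
  by have := pointwise n a c bb i j hj; rewrite /gg.
rewrite !big_split /= !sum_deltaC.
have h1 : (j.-1 < n.+1)%N by lia.
have h2 : (j < n.+1)%N by lia.
rewrite h1 h2 ltnS.
by [].
Qed.


Lemma final_arith (p q b0 B c dn A k : int) : 0 < B -> 0 < p ->
  c * B = b0 * (p * p) -> b0 * dn * c - B * A = 1 ->
  c * c - (p * q - 1) = k * (p * p) -> B = p * p /\ b0 = c.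
Proof.
move=> hB hp hc he hk.
set P := p * p in hc hk *.
set m := c * c * dn - A * P.
have hPm : P = B * m.
  transitivity (P * (b0 * dn * c - B * A)); first by rewrite he mulr1.
  transitivity (dn * c * (b0 * P) - B * A * P); first ring.
  rewrite -hc /m; ring.
have hbm : b0 * m = c.
  apply: (@mulfI _ B); first by rewrite gt_eqF.
  transitivity (b0 * (B * m)); first ring.
  by rewrite -hPm -hc mulrC.
have hm0 : 0 < m.
  have hP0 : 0 < P by rewrite /P; nia.
  rewrite hPm in hP0; nia.
set s := m * b0 * b0 - k * B.
have ms : m * s = p * q - 1.
  transitivity ((b0 * m) * (b0 * m) - k * (B * m)); first by rewrite /s; ring.
  rewrite hbm -hPm. lia.
set w := q * B - p * s.
have mw : m * w = p.
  transitivity (q * (B * m) - p * (m * s)); first by rewrite /w; ring.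
  rewrite -hPm ms /P; ring.
have m1 : m = 1.
  apply: (m_eq1 _ (w * q - s) hm0).
  transitivity ((m * w) * q - m * s); first ring.
  rewrite mw ms; ring.
split.
  by rewrite hPm m1 mulr1.
by rewrite -hbm m1 mulr1.
Qed.


Lemma delta_last n j : (j <= n)%N ->
  (delta_mx 0 ord_max : 'rV[int]_(n.+1)) 0 (inord j) = if j == n then 1 else 0.
Proof.
move=> hj; rewrite mxE /= -val_eqE /= inordK ?ltnS //.
by case: (j == n).
Qed.

Theorem lemma3p2 (p q n : nat) (a : nat -> int) (c : int) (b : 'rV[int]_(n.+1)) :
  (1 <= q)%N -> (q < p)%N -> coprime p q ->
  (forall i, (1 <= i <= n)%N -> 2 <= a i) ->
  hjcf [seq a i | i <- iota 1 n] = ((p ^ 2)%N%:R / ((p * q)%N%:R - 1)) ->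
  (2 <= n)%N ->
  (c ^+ 2 == (p * q)%N%:Z - 1 %[mod (p ^ 2)%N%:Z])%Z ->
  (\det (gram n a c) = 1 \/ \det (gram n a c) = -1) ->
  b *m gram n a c = delta_mx 0 ord_max ->
  0 < (b *m gram n a c *m b^T) 0 0 ->
  (forall i : 'I_(n.+1), (i < n)%N -> b 0 i = c * dseq a i.+1) /\
  (b 0 ord_max = (p ^ 2)%N%:Z \/ - b 0 ord_max = (p ^ 2)%N%:Z) /\
  a n * dseq a n - dseq a n.-1 = (p ^ 2)%N%:Z /\
  dseq a n = (p ^ 2)%N%:Z - (p * q)%N%:Z - 1.
Proof.
move=> hq hpq _ ha hh hn hmod _ hb hpos.
have [hD hdn] := cf_part p q n a hq hpq ha hh hn.
have hcol : forall j, (j <= n)%N ->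
  (if (0 < j)%N then b 0 (inord j.-1) * off n c j.-1 else 0)
  + b 0 (inord j) * (- a j.+1)
  + (if (j < n)%N then b 0 (inord j.+1) * off n c j else 0) = if j == n then 1 else 0.
  by move=> j hj; rewrite -colsum // hb delta_last.
have hB : 0 < b 0 (inord n).
  move: hpos; rewrite hb -rowE !mxE.
  by rewrite (_ : ord_max = inord n) //; apply/val_inj; rewrite /= inordK.
have hlast : b 0 ord_max = b 0 (inord n).
  by rewrite (_ : ord_max = inord n) //; apply/val_inj; rewrite /= inordK.
have hmid : forall i : 'I_(n.+1), b 0 i = b 0 (inord i) by move=> i; rewrite inord_val.
have hR : forall k, (k.+1 < n)%N ->
   b 0 (inord k) = b 0 (inord 0) * dseq a k.+1 /\
   b 0 (inord k.+1) = b 0 (inord 0) * dseq a k.+2.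
  elim=> [|k IH] hk.
    have := hcol 0%N isT.
    have -> : (0 == n) = false by apply/eqP; lia.
    have -> : (0 < n)%N by lia.
    have -> : off n c 0 = 1 by rewrite /off hn.
    move=> /= e.
    rewrite dstep /dseq /=. split; first ring.
    by move: e; generalize (b 0 (inord 0)) (b 0 (inord 1)) => x y e; lra.
  have [IH1 IH2] := IH (ltnW hk).
  split => //.
  have := hcol k.+1 (ltnW (ltnW hk)).
  have -> : (k.+1 == n) = false by apply/eqP; lia.
  have -> : (k.+1 < n)%N by lia.
  have -> : off n c k = 1 by rewrite /off (ltnW hk).
  have -> : off n c k.+1 = 1 by rewrite /off hk.
  move=> /= e.
  rewrite (dstep a k.+1).
  move: e; rewrite IH1 IH2.
  generalize (b 0 (inord 0)) (b 0 (inord k.+2)) (dseq a k.+1) (dseq a k.+2) (a k.+2) => x y d1 d2 ak e.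
  lra.
case: n b hb hpos hn ha hh hD hdn hcol hB hlast hmid hR => [|[|m]] // b hb hpos hn ha hh hD hdn hcol hB hlast hmid hR.
have [R1 R2] := hR m (leqnn _).
have e1 := hcol m.+1 (leqnSn _).
have e2 := hcol m.+2 (leqnn _).
move: e1 e2.
have -> : (m.+1 == m.+2) = false by apply/eqP; lia.
rewrite /= !eqxx ltnSn ltnn.
have -> : off m.+2 c m = 1 by rewrite /off leqnn.
have -> : off m.+2 c m.+1 = c by rewrite /off ltnn eqxx.
rewrite R1 R2 => e1 e2.
have hDD : a m.+2 * dseq a m.+2 - dseq a m.+1 = (p ^ 2)%N%:Z by rewrite -dstep.
move: hmod; rewrite eqz_mod_dvd => /dvdzP [k hk].
have hP : (p ^ 2)%N%:Z = p%:Z * p%:Z by rewrite expnS expn1 PoszM.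
have hQ : (p * q)%N%:Z = p%:Z * q%:Z by rewrite PoszM.
have hc : c * b 0 (inord m.+2) = b 0 (inord 0) * (p%:Z * p%:Z).
  rewrite -hP -hDD; move: e1.
  generalize (b 0 (inord 0)) (b 0 (inord m.+2)) (dseq a m.+1) (dseq a m.+2) (a m.+2) => x y d1 d2 am e.
  lra.
have he : b 0 (inord 0) * dseq a m.+2 * c - b 0 (inord m.+2) * a m.+3 = 1.
  move: e2.
  generalize (b 0 (inord 0)) (b 0 (inord m.+2)) (dseq a m.+2) (a m.+3) => x y d2 am e.
  lra.
have hk' : c * c - (p%:Z * q%:Z - 1) = k * (p%:Z * p%:Z) by rewrite -hQ -hP -hk expr2.
have hp0 : 0 < p%:Z by rewrite ltz_nat; lia.
have [fB fb0] := final_arith p q _ _ c _ _ k hB hp0 hc he hk'.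
split; last split => //.
  move=> i hi; rewrite hmid.
  have [hi1|hi1] := ltnP i.+1 m.+2.
    by have [R3 _] := hR i hi1; rewrite R3 -fb0.
  have -> : (i : nat) = m.+1 by lia.
  by rewrite R2 -fb0.
by left; rewrite hlast fB hP.
Qed.
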